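(* For $n\ge1$, the map $$\sigma\mapsto\big(\Delta(\sigma^{(n-1)}),\dots,\Delta(\sigma''),\Delta(\sigma'),\Delta(\sigma)\big)$$ is a bijection from $\mathfrak{S}_n$ onto the set of $n$-chains of Dyck shapes.
   Context: Permutations $\sigma\in\mathfrak{S}_n$ are written as words $\sigma_1\cdots\sigma_n$, with the conventions $\sigma_0=0$, $\sigma_{n+1}=n+1$. A value $\sigma_i$ ($1\le i\le n$) is a peak if $\sigma_{i-1}<\sigma_i>\sigma_{i+1}$, a valley if $\sigma_{i-1}>\sigma_i<\sigma_{i+1}$, a double ascent if $\sigma_{i-1}<\sigma_i<\sigma_{i+1}$, a double descent if $\sigma_{i-1}>\sigma_i>\sigma_{i+1}$. The profile $\Delta(\sigma)$ is the word $w_1\cdots w_{2n}$ over $\{\nearrow,\searrow\}$ where, for each value $j\in\{1,\dots,n\}$, $w_{2j-1}w_{2j}$ is $\nearrow\nearrow$ if $j$ is a valley, $\searrow\searrow$ if $j$ is a peak, $\nearrow\searrow$ if $j$ is a double ascent, $\searrow\nearrow$ if $j$ is a double descent. $\sigma'\in\mathfrak{S}_{n-1}$ is obtained from $\sigma$ by deleting the letter $n$; $\sigma^{(0)}=\sigma$ and $\sigma^{(i+1)}=(\sigma^{(i)})'$, so $\sigma^{(n-i)}\in\mathfrak{S}_i$. A Dyck path of length $2m$ is a lattice path from $(0,0)$ to $(2m,0)$ with steps $\nearrow=(1,1)$, $\searrow=(1,-1)$ never going below the $x$-axis; $P(x)$ denotes its height at abscissa $x$. A cell is a point $(a,b)\in\mathbb{Z}^2$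 with $b\ge0$, $a+b$ even (the tilted square with vertices $(a,b),(a+1,b\pm1),(a+2,b)$). The Dyck shape of $P$ (length $2m$) is $S(P)=\{(a,b): b\ge0,\ a+b\text{ even},\ 0\le a\le 2m-2,\ b+1\le P(a+1)\}$. Cells are adjacent if they differ by $(\pm1,\pm1)$. A ribbon is a nonempty set of cells, connected for adjacency, containing no four cells $(a,b),(a+1,b+1),(a+1,b-1),(a+2,b)$. For Dyck paths $D$ of length $2m$ and $E$ of length $2m+2$, $D\sqsubset E$ means $S(D)\subseteq S(E)$ and $S(E)\setminus S(D)$ is a ribbon. An $n$-chain of Dyck shapes is a sequence $D_1\sqsubset\cdots\sqsubset D_n$ of Dyck paths with $D_i$ of length $2i$. *)

(* Defs.v *)
From mathcomp Require Import all_boot all_order all_algebra all_fingroup.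
Set Implicit Arguments. Unset Strict Implicit. Unset Printing Implicit Defensive.
Import GRing.Theory Num.Theory.

(* sigma : 'S_n is viewed as the word sigma_1 ... sigma_n over {1..n},
   with sigma_i = (sigma (i-1)) + 1. *)
Definition perm_word (n : nat) (s : 'S_n) : seq nat :=
  [seq (s i).+1 | i <- enum 'I_n].

(* sigma' : delete the letter m from a word of length m (a permutation of 1..m). *)
Definition del_max (w : seq nat) : seq nat := filter (fun x => x != size w) w.

Definition derived (k : nat) (w : seq nat) : seq nat := iter k del_max w.

(* Neighbours of the value j in word w of length m,
   with conventions sigma_0 = 0 and sigma_(m+1) = m+1. *)
Definition prev_of (w : seq nat) (j : nat) : nat := nth 0 (0 :: w) (index j w).
Definition next_of (w : seq nat) (j : nat) : nat := nth (size w).+1 w (index j w).+1.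

Definition is_peak (w : seq nat) j := (prev_of w j < j) && (j > next_of w j).
Definition is_valley (w : seq nat) j := (prev_of w j > j) && (j < next_of w j).
Definition is_dasc (w : seq nat) j := (prev_of w j < j) && (j < next_of w j).
Definition is_ddesc (w : seq nat) j := (prev_of w j > j) && (j > next_of w j).

(* Steps: true = up (1,1), false = down (1,-1). *)
Definition profile_letters (w : seq nat) (j : nat) : seq bool :=
  if is_valley w j then [:: true; true]
  else if is_peak w j then [:: false; false]
  else if is_dasc w j then [:: true; false]
  else if is_ddesc w j then [:: false; true]
  else [::].

Definition profile (w : seq nat) : seq bool :=
  flatten [seq profile_letters w j | j <- iota 1 (size w)].

Definition chain_of (n : nat) (s : 'S_n) : seq (seq bool) :=
  [seq profile (derived (n - i) (perm_word s)) | i <- iota 1 n].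

Definition step (b : bool) : int := if b then 1%R else (-1)%R.

Definition height (P : seq bool) (x : nat) : int :=
  (\sum_(b <- take x P) step b)%R.

Definition is_dyck (m : nat) (P : seq bool) : Prop :=
  size P = (2 * m)%N /\ (forall x, x <= size P -> (0 <= height P x)%R)
  /\ height P (size P) = 0%R.

Definition cell := (int * int)%type.

Definition is_cell (c : cell) : Prop :=
  (0 <= c.2)%R /\ ~~ odd `|(c.1 + c.2)%R|%N.

Definition shape (P : seq bool) (c : cell) : Prop :=
  is_cell c /\ (0 <= c.1)%R /\ (c.1 <= Posz (size P) - 2)%R /\
  (exists a : nat, c.1 = Posz a /\ (c.2 + 1 <= height P a.+1)%R).

Definition adjacent (c d : cell) : bool :=
  ((d.1 == c.1 + 1) || (d.1 == c.1 - 1))%R && ((d.2 == c.2 + 1) || (d.2 == c.2 - 1))%R.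

Definition connected_cells (R : cell -> Prop) : Prop :=
  forall c d, R c -> R d ->
    exists p : seq cell,
      (forall e, e \in p -> R e) /\
      path adjacent c p /\ last c p = d.

Definition ribbon (R : cell -> Prop) : Prop :=
  (exists c, R c) /\ (forall c, R c -> is_cell c) /\ connected_cells R /\
  ~ (exists a b : int,
        R (a, b) /\ R (a + 1, b + 1)%R /\ R (a + 1, b - 1)%R /\ R (a + 2, b)%R).

Definition sqsub (D E : seq bool) : Prop :=
  (forall c, shape D c -> shape E c) /\
  ribbon (fun c => shape E c /\ ~ shape D c).

Definition is_chain (n : nat) (c : seq (seq bool)) : Prop :=
  size c = n /\
  (forall i, i < n -> is_dyck i.+1 (nth [::] c i)) /\
  (forall i, i.+1 < n -> sqsub (nth [::] c i) (nth [::] c i.+1)).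

(* Main.v *)
Require Import Defs.
From mathcomp Require Import all_boot all_order all_algebra all_fingroup zify.
Import Order.TTheory GRing.Theory Num.Theory.
Import Defs.
Set Implicit Arguments. Unset Strict Implicit. Unset Printing Implicit Defensive.

Lemma height0 P : height P 0 = 0%R.
Proof. by rewrite /height take0 big_nil. Qed.

Lemma heightS P x : height P x.+1 =
  (height P x + (if (x < size P)%N then step (nth false P x) else 0))%R.
Proof.
rewrite /height; case: ltnP => h.
  by rewrite (take_nth false h) -cats1 big_cat big_seq1.
by rewrite !take_oversize ?addr0 //; apply: leqW.
Qed.

Lemma height_over P x : (size P <= x)%N -> height P x = height P (size P).
Proof. by move=> h; rewrite /height !take_oversize. Qed.

Lemma height_cat P Q x : height (P ++ Q) x = (height P x + height Q (x - size P))%R.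
Proof.
rewrite /height take_cat; case: ltnP => h.
  have -> : (x - size P = 0)%N by apply/eqP; rewrite subn_eq0 ltnW.
  by rewrite take0 big_nil addr0.
by rewrite big_cat (take_oversize h).
Qed.

Lemma height_step P x : (height P x - 1 <= height P x.+1 <= height P x + 1)%R.
Proof. rewrite heightS; case: ifP => _. case: nth => /=; lia. lia. Qed.

Lemma height_stepE P x : (x < size P)%N ->
  height P x.+1 = (height P x + 1)%R \/ height P x.+1 = (height P x - 1)%R.
Proof. move=> h; rewrite heightS h; case: nth; [left|right] => //. Qed.

Lemma height_par P x : (x <= size P)%N -> exists z : int, height P x = (Posz x - 2 * z)%R.
Proof.
elim: x => [|x IH] h; first by exists 0%R; rewrite height0.
have [z Hz] := IH (ltnW h).
rewrite heightS h Hz; case: nth => /=; [exists z | exists (z + 1)%R]; lia.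
Qed.

Lemma height_flip P p x : (p < size P)%N -> nth false P p = false ->
  height (set_nth false P p true) x = (height P x + (if (p < x)%N then 2 else 0))%R.
Proof.
move=> hp hn; elim: x => [|x IH]; first by rewrite !height0.
have hs : size (set_nth false P p true) = size P by rewrite size_set_nth; apply/maxn_idPr.
rewrite !heightS hs IH nth_set_nth /=.
case: (ltnP x (size P)) => hx; last by rewrite ltnS (leq_trans _ hx) ?(leq_trans (ltnW hp)) //; lia.
case: eqP => [->|hxp]; first by rewrite hn ltnn ltnSn /=; lia.
have -> : (p < x.+1)%N = (p < x)%N by rewrite ltnS leq_eqVlt; case: eqP => // ?; subst.
by rewrite addrAC.
Qed.

Lemma eq_from_height P Q : size P = size Q ->
  (forall x, (x <= size P)%N -> height P x = height Q x) -> P = Q.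
Proof.
move=> hs hh; apply: (eq_from_nth (x0:=false)) => // i hi.
have := hh i.+1 hi; rewrite !heightS -hs hi (hh i (ltnW hi)).
by case: nth; case: nth => //=; lia.
Qed.

Lemma is_cellP (c : cell) : is_cell c <-> (0 <= c.2)%R /\ exists y : int, (c.1 + c.2 = 2 * y)%R.
Proof.
rewrite /is_cell; split=> -[h1 h2]; split => //.
  move: h2; case: (c.1 + c.2)%R => n ho.
    have ho' : ~~ odd n := ho.
    exists (Posz (n./2)); move: (odd_double_half n); rewrite (negbTE ho') /=.
    lia.
  have ho' : ~~ odd n.+1 := ho.
  exists (- Posz ((n.+1)./2))%R; move: (odd_double_half n.+1); rewrite (negbTE ho') /=.
  rewrite NegzE; lia.
case: h2 => y ->; rewrite abszM /= mul2n odd_double //.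
Qed.

Lemma shapeP P (a b : int) : shape P (a, b) <->
  exists k : nat, a = k /\ (0 <= b)%R /\ (exists y : int, (Posz k + b = 2 * y)%R) /\
    (k.+2 <= size P)%N /\ (b + 1 <= height P k.+1)%R.
Proof.
rewrite /shape is_cellP /=; split.
  move=> [[hb [y hy]] [h0 [h1 [k [hk hh]]]]]; exists k; subst a.
  by do !split => //; [exists y | lia].
move=> [k [-> [hb [[y hy] [hk hh]]]]]; do !split => //; first by exists y.
  lia.
by exists k.
Qed.

Lemma adjP (c d : cell) : adjacent c d <->
  ((d.1 = c.1 + 1 \/ d.1 = c.1 - 1) /\ (d.2 = c.2 + 1 \/ d.2 = c.2 - 1))%R.
Proof.
rewrite /adjacent; split.
  by case/andP => /orP [/eqP|/eqP] ? /orP [/eqP|/eqP] ?; split; auto.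
by case=> [[]->[]->]; rewrite !eqxx ?orbT.
Qed.

Lemma path_cols (c : cell) p (t : int) : path adjacent c p ->
  (c.1 <= t <= (last c p).1)%R -> exists2 e, e \in c :: p & e.1 = t.
Proof.
elim: p c => [|e p IH] c /=.
  move=> _ h; exists c; rewrite ?mem_head //; lia.
move=> /andP [hce hp] ht.
case: (eqVneq t c.1) => [->|hne]; first by exists c; rewrite ?mem_head.
have [e' he' <-] : exists2 e', e' \in e :: p & e'.1 = t.
  apply: IH => //; move/adjP: hce => [h1 _]; lia.
by exists e' => //; rewrite in_cons he' orbT.
Qed.

Lemma path_iota (f : nat -> cell) n :
  (forall i, (i < n)%N -> adjacent (f i) (f i.+1)) ->
  path adjacent (f 0%N) [seq f i | i <- iota 1 n] /\
  last (f 0%N) [seq f i | i <- iota 1 n] = f n.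
Proof.
elim: n f => [|n IH] f hf /=; first by [].
have -> : iota 2 n = [seq 1 + i | i <- iota 1 n]%N by rewrite -iotaDl.
rewrite -map_comp.
have [h1 h2] := IH (fun i => f i.+1) (fun i hi => hf i.+1 hi).
by rewrite (hf 0%N) //=.
Qed.

Lemma G1gen m D E p0 : (0 < m)%N -> is_dyck m D -> (p0 <= 2 * m)%N -> size E = (2 * m).+2 ->
  (forall x, (x <= 2 * m)%N -> height E x = height D x + (if (p0 < x)%N then 2 else 0))%R ->
  height E (2 * m).+1 = 1%R -> height E (2 * m).+2 = 0%R -> is_dyck m.+1 E /\ sqsub D E.
Proof.
move=> m0 [sD [posD endD]] hp sE hE h1 h2.
rewrite sD in posD endD.
split.
  split; first by rewrite sE; lia.
  split; last by rewrite sE.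
  move=> x; rewrite sE => hx.
  case: (leqP x (2 * m)) => hx2.
    rewrite hE //; have := posD x ltac:(lia); case: ifP => _; lia.
  have [->|->] : x = (2 * m).+1 \/ x = (2 * m).+2 by lia.
    by rewrite h1.
  by rewrite h2.
have HR : forall a b, (shape E (a,b) /\ ~ shape D (a,b)) <->
    exists k : nat, a = k /\ (p0 <= k <= 2 * m)%N /\ b = (height E k.+1 - 1)%R.
  move=> a b; split.
    move=> [/shapeP [k [-> [hb [[y hy] [hk hh]]]]] nD]; exists k; split => //.
    case: (leqP k.+2 (2 * m)) => hk2.
      have hlt : (height D k.+1 < b + 1)%R.
        rewrite ltNge; apply/negP => hle; apply: nD; apply/shapeP; exists k.
        by do !split => //; [exists y | rewrite sD].
      have [z hz] := @height_par D k.+1 ltac:(rewrite sD; lia).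
      move: hh; rewrite hE; last by lia.
      case: ifP => hpk; last by lia.
      move=> hh; split; [lia | lia].
    move: hh hy; have [->|->] : k = (2 * m).-1 \/ k = 2 * m by lia.
      have e2 : (2 * m).-1.+1 = 2 * m by lia.
      rewrite e2 hE // endD; case: ifP => hpk; last by lia.
      move=> hh hy; split; [lia | lia].
    by rewrite h1 => hh hy; split; [lia | lia].
  move=> [k [-> [/andP [hk1 hk2] ->]]].
  have hge : (1 <= height E k.+1)%R.
    case: (ltnP k (2 * m)) => hk3.
      rewrite hE //; have := posD k.+1 ltac:(lia); case: ifP => h; lia.
    have -> : k = 2 * m by lia.
    by rewrite h1.
  have [z hz] := @height_par E k.+1 ltac:(rewrite sE; lia).
  split.
    apply/shapeP; exists k; do !split => //; first lia.
      exists (Posz k - z)%R; lia.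
    by rewrite sE; lia.
    lia.
  move/shapeP => [k' [ek' [_ [_ [hk' hh]]]]].
  have ekk : k' = k by lia.
  subst k'; move: hh; rewrite sD in hk'; rewrite hE; last by lia.
  case: ifP => h; lia.
split.
  move=> [a b] /shapeP [k [-> [hb [[y hy] [hk hh]]]]]; apply/shapeP; exists k.
  do !split => //; first by exists y.
    by rewrite sE; rewrite sD in hk; lia.
  rewrite sD in hk; rewrite hE; last by lia.
  case: ifP => _; lia.
pose g (k : nat) : cell := (Posz k, height E k.+1 - 1)%R.
have gR : forall k, (p0 <= k <= 2 * m)%N -> shape E (g k) /\ ~ shape D (g k).
  by move=> k hk; apply/HR; exists k.
have gadj : forall k, (k < 2 * m)%N -> adjacent (g k) (g k.+1) /\ adjacent (g k.+1) (g k).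
  move=> k hk; have := @height_stepE E k.+1 ltac:(rewrite sE; lia).
  by move=> hs; split; apply/adjP => /=; lia.
split; first by exists (g (2 * m)%N); apply: gR; rewrite hp leqnn.
split; first by move=> c [[hc _] _].
split.
  move=> [a1 b1] [a2 b2] H1 H2; move/HR: H1 => [k1 [-> [hk1 ->]]].
  move/HR: H2 => [k2 [-> [hk2 ->]]].
  case: (leqP k1 k2) => hk.
    have [hpath hlast] := @path_iota (fun i => g (k1 + i)%N) (k2 - k1)
      ltac:(by move=> i hi; rewrite /= addnS; case: (gadj (k1 + i)%N ltac:(lia))).
    rewrite addn0 in hpath hlast.
    exists [seq g (k1 + i)%N | i <- iota 1 (k2 - k1)]; split.
      move=> e /mapP [i hi ->]; apply: gR; rewrite mem_iota in hi; lia.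
    split; first exact: hpath.
    by rewrite hlast subnKC.
  have [hpath hlast] : path adjacent (g (k1 - 0)%N) [seq g (k1 - i)%N | i <- iota 1 (k1 - k2)] /\
      last (g (k1 - 0)%N) [seq g (k1 - i)%N | i <- iota 1 (k1 - k2)] = g (k1 - (k1 - k2))%N.
    apply: (@path_iota (fun i => g (k1 - i)%N)) => i hi.
    have -> : (k1 - i = (k1 - i.+1).+1)%N by lia.
    by case: (gadj (k1 - i.+1)%N ltac:(lia)).
  rewrite subn0 in hpath hlast.
  exists [seq g (k1 - i)%N | i <- iota 1 (k1 - k2)]; split.
    move=> e /mapP [i hi ->]; apply: gR; rewrite mem_iota in hi; lia.
  split; first exact: hpath.
  by rewrite hlast subKn // ltnW.
move=> [a [b [_ [H2 [H3 _]]]]]; move/HR: H2 => [k [ek [_ eb]]].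
move/HR: H3 => [k' [ek' [_ eb']]].
have ekk : k' = k by lia.
subst k'; lia.
Qed.

Lemma G1dyck m D E p0 : is_dyck m D -> (p0 <= 2 * m)%N -> size E = (2 * m).+2 ->
  (forall x, (x <= 2 * m)%N -> height E x = height D x + (if (p0 < x)%N then 2 else 0))%R ->
  height E (2 * m).+1 = 1%R -> height E (2 * m).+2 = 0%R -> is_dyck m.+1 E.
Proof.
move=> [sD [posD endD]] hp sE hE h1 h2.
rewrite sD in posD endD.
split; first by rewrite sE; lia.
split; last by rewrite sE.
move=> x; rewrite sE => hx.
case: (leqP x (2 * m)) => hx2.
  rewrite hE //; have := posD x ltac:(lia); case: ifP => _; lia.
have [->|->] : x = (2 * m).+1 \/ x = (2 * m).+2 by lia.
  by rewrite h1.
by rewrite h2.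
Qed.

Lemma cand_ud m D : is_dyck m D ->
  let E := D ++ [:: true; false] in
  size E = (2 * m).+2 /\
  (forall x, (x <= 2 * m)%N -> height E x = height D x + (if (2 * m < x)%N then 2 else 0))%R /\
  height E (2 * m).+1 = 1%R /\ height E (2 * m).+2 = 0%R.
Proof.
move=> [sD [posD endD]] E; rewrite /E size_cat sD /=; split; first lia.
split.
  move=> x hx; rewrite height_cat sD ltnNge hx /=.
  have -> : (x - 2 * m = 0)%N by lia.
  by rewrite height0.
rewrite sD in endD; rewrite !height_cat sD.
rewrite (@height_over D (2 * m).+1) ?sD; last lia.
rewrite (@height_over D (2 * m).+2) ?sD; last lia.
rewrite endD.
have -> : ((2 * m).+1 - 2 * m = 1)%N by lia.
have -> : ((2 * m).+2 - 2 * m = 2)%N by lia.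
rewrite /height /= !big_cons !big_nil /=; split; lia.
Qed.

Lemma cand_flip m D p : is_dyck m D -> (p < 2 * m)%N -> nth false D p = false ->
  let E := set_nth false D p true ++ [:: false; false] in
  size E = (2 * m).+2 /\
  (forall x, (x <= 2 * m)%N -> height E x = height D x + (if (p < x)%N then 2 else 0))%R /\
  height E (2 * m).+1 = 1%R /\ height E (2 * m).+2 = 0%R.
Proof.
move=> [sD [posD endD]] hp hn E.
have hs : size (set_nth false D p true) = 2 * m.
  by rewrite size_set_nth sD; apply/maxn_idPr; lia.
have hp' : (p < size D)%N by rewrite sD.
rewrite /E size_cat hs /=; split; first lia.
split.
  move=> x hx; rewrite height_cat hs height_flip //.
  have -> : (x - 2 * m = 0)%N by lia.
  by rewrite height0 addr0.
rewrite !height_cat hs !height_flip //.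
rewrite sD in endD.
rewrite (@height_over D (2 * m).+1) ?sD; last lia.
rewrite (@height_over D (2 * m).+2) ?sD; last lia.
rewrite endD.
have -> : ((2 * m).+1 - 2 * m = 1)%N by lia.
have -> : ((2 * m).+2 - 2 * m = 2)%N by lia.
rewrite /height /= !big_cons !big_nil /=.
have -> : (p < (2 * m).+1)%N by lia.
have -> : (p < (2 * m).+2)%N by lia.
split; lia.
Qed.

Lemma height1 P : (0 < size P)%N -> (0 <= height P 1)%R -> height P 1 = 1%R.
Proof. move=> hs; rewrite heightS height0 hs; case: nth => /=; lia. Qed.

Lemma G2 m D E : (0 < m)%N -> is_dyck m D -> is_dyck m.+1 E -> sqsub D E ->
  exists2 p0, (p0 <= 2 * m)%N &
  (forall x, (x <= 2 * m)%N -> height E x = height D x + (if (p0 < x)%N then 2 else 0))%R /\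
  height E (2 * m).+1 = 1%R /\ height E (2 * m).+2 = 0%R.
Proof.
move=> m0 [sD [posD endD]] [sE [posE endE]] [Hinc [_ [_ [Hconn Hnosq]]]].
have sE' : size E = (2 * m).+2 by rewrite sE; lia.
rewrite sD in posD endD; rewrite sE' in posE endE.
have h1 : height E (2 * m).+1 = 1%R.
  have := height_step E (2 * m).+1; have := posE (2 * m).+1 ltac:(lia).
  have [z hz] := @height_par E (2 * m).+1 ltac:(rewrite sE'; lia).
  lia.
have h2m : height E (2 * m) = 0%R \/ height E (2 * m) = 2%R.
  have := height_step E (2 * m); have := posE (2 * m) ltac:(lia).
  have [z hz] := @height_par E (2 * m) ltac:(rewrite sE'; lia).
  lia.
pose R := fun c => shape E c /\ ~ shape D c.
have mkR : forall (k : nat) (b : int), (0 <= b)%R -> (exists y : int, Posz k + b = 2 * y)%R ->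
    (k <= 2 * m)%N -> (b + 1 <= height E k.+1)%R -> (height D k.+1 < b + 1)%R -> R (Posz k, b).
  move=> k b hb hy hk hE hD; split.
    apply/shapeP; exists k; do !split => //; rewrite sE'; lia.
  move/shapeP => [k' [ek' [_ [_ [_ hh]]]]].
  have ekk : k' = k by lia.
  subst k'; lia.
have c0R : R (Posz (2 * m), 0%R).
  apply: mkR => //; first by exists (Posz m); lia.
  by rewrite h1.
  rewrite (@height_over D (2 * m).+1) ?sD // endD; lia.
have hD1 : height D 1 = 1%R by apply: height1; [rewrite sD; lia | apply: posD; lia].
have hE1 : height E 1 = 1%R by apply: height1; [rewrite sE'; lia | apply: posE; lia].
have Hpar : forall x, (x <= 2 * m)%N -> exists z : int, (height E x - height D x = 2 * z)%R.
  move=> x hx; have [z1 hz1] := @height_par D x ltac:(rewrite sD; lia).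
  have [z2 hz2] := @height_par E x ltac:(rewrite sE'; lia).
  exists (z1 - z2)%R; lia.
have Hge : forall x, (x <= 2 * m)%N -> (height D x <= height E x)%R.
  move=> [|k] hk; first by rewrite !height0.
  case: (leqP (2 * m) k.+1) => hk2.
    have -> : k.+1 = 2 * m by lia.
    by rewrite endD; apply: posE; lia.
  case: (lerP (height D k.+1) 0) => hD0; first by have := posE k.+1 ltac:(lia); lia.
  have [z hz] := @height_par D k.+1 ltac:(rewrite sD; lia).
  have : shape D (Posz k, height D k.+1 - 1)%R.
    apply/shapeP; exists k; do !split => //; first lia.
      by exists (Posz k - z)%R; lia.
    by rewrite sD; lia.
    lia.
  move/Hinc/shapeP => [k' [ek' [_ [_ [_ hh]]]]].
  have ekk : k' = k by lia.
  subst k'; lia.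
have Rcol : forall a b, R (a, b) -> exists k : nat, a = k /\ (k <= 2 * m)%N /\
    ((k < 2 * m)%N -> (height D k.+1 < height E k.+1)%R).
  move=> a b [/shapeP [k [-> [hb [[y hy] [hk hh]]]]] nD]; exists k; split => //.
  rewrite sE' in hk; split; first lia.
  move=> hk2; case: (leqP k.+2 (2 * m)) => hk3.
    have : ~ (b + 1 <= height D k.+1)%R.
      move=> hle; apply: nD; apply/shapeP; exists k; do !split => //; first by exists y.
      by rewrite sD.
    lia.
  have ek : k.+1 = 2 * m by lia.
  rewrite ek endD; move: hh; rewrite ek; lia.
have Hmono : forall x x', (1 <= x)%N -> (x <= x')%N -> (x' <= 2 * m)%N ->
    (height D x < height E x)%R -> (height D x' < height E x')%R.
  move=> [|k] x' // _ hxx' hx' hlt.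
  case: (leqP (2 * m) k.+1) => hk2.
    by have -> : x' = k.+1 by lia.
  have [z hz] := Hpar k.+1 ltac:(lia).
  have cR : R (Posz k, height D k.+1 + 1)%R.
    apply: mkR; first by have := posD k.+1 ltac:(lia); lia.
    - have [z' hz'] := @height_par D k.+1 ltac:(rewrite sD; lia).
      by exists (Posz k + 1 - z')%R; lia.
    - lia.
    - lia.
    - lia.
  have [p [pall [ppath plast]]] := Hconn _ _ cR c0R.
  have [e he he1] := @path_cols _ p (Posz x'.-1) ppath ltac:(rewrite plast /=; lia).
  have eR : R e by move: he; rewrite in_cons => /orP [/eqP ->|/pall].
  case: e he he1 eR => a b _ /= ea /Rcol [k' [ek' [hk' hlt']]].
  have ex : k'.+1 = x' by lia.
  rewrite -ex; apply: hlt'; lia.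
have Hle2 : forall x, (x <= 2 * m)%N -> (height E x <= height D x + 2)%R.
  move=> x hx; case: (leqP (2 * m) x) => hx2.
    have -> : x = 2 * m by lia.
    rewrite endD; lia.
  have [z hz] := Hpar x ltac:(lia).
  case: (lerP (height E x) (height D x + 2)) => // hgt; exfalso.
  case: x hx hx2 hz hgt => [|[|j]] hx hx2 hz hgt.
  - by move: hgt; rewrite !height0; lia.
  - by move: hgt; rewrite hD1 hE1; lia.
  apply: Hnosq; exists (Posz j), (height D j.+2 + 2)%R.
  have sE1 := height_step E j.+1; have sE2 := height_step E j.+2.
  have sD1 := height_step D j.+1; have sD2 := height_step D j.+2.
  have hDp := posD j.+2 ltac:(lia).
  have [z' hz'] := @height_par D j.+2 ltac:(rewrite sD; lia).
  split; last split; last split.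
  - apply: mkR; try lia; by exists (Posz j + 2 - z')%R; lia.
  - have -> : (Posz j + 1 = Posz j.+1)%R by lia.
    apply: mkR; try lia; by exists (Posz j + 3 - z')%R; lia.
  - have -> : (Posz j + 1 = Posz j.+1)%R by lia.
    apply: mkR; try lia; by exists (Posz j + 2 - z')%R; lia.
  - have -> : (Posz j + 2 = Posz j.+2)%R by lia.
    apply: mkR; try lia; by exists (Posz j + 3 - z')%R; lia.
pose P x := (x <= 2 * m)%N && (height E x == height D x).
have exP : exists x, P x by exists 0%N; rewrite /P leq0n !height0 eqxx.
have ubP : forall x, P x -> (x <= 2 * m)%N by move=> x /andP [].
case: (ex_maxnP exP ubP) => p0 /andP [hp0 /eqP hEq] hmax.
exists p0 => //; split => //.
move=> x hx; have [z hz] := Hpar x hx; have := Hge x hx; have := Hle2 x hx.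
case: ifP => hpx.
  have : height E x != height D x.
    apply/negP => /eqP heq; have := hmax x; rewrite /P hx heq eqxx /= => /(_ isT); lia.
  move/eqP; lia.
case: x hx hz hpx => [|x] hx hz hpx; first by rewrite !height0; lia.
case: (ltrP (height D x.+1) (height E x.+1)) => hlt; last lia.
have := Hmono x.+1 p0 isT ltac:(lia) hp0 hlt; lia.
Qed.

Definition wp (w : seq nat) := uniq w /\ forall j, (j \in w) = (0 < j <= size w)%N.
Definition ins (k : nat) (w : seq nat) := take k w ++ (size w).+1 :: drop k w.

Lemma nth_ins (d : nat) w k p : (k <= size w)%N ->
  nth d (ins k w) p = if (p < k)%N then nth d w p else if p == k then (size w).+1 else nth d w p.-1.
Proof.
move=> hk; rewrite /ins nth_cat size_takel //.
case: ltnP => hp; first by rewrite nth_take.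
case: eqP => [->|hne]; first by rewrite subnn.
have -> : (p - k = (p - k.+1).+1)%N by lia.
rewrite /= nth_drop; congr nth; lia.
Qed.

Lemma perm_ins w k : perm_eq (ins k w) ((size w).+1 :: w).
Proof.
rewrite /ins -cat1s perm_catCA /= cat_take_drop //.
Qed.

Lemma size_ins w k : size (ins k w) = (size w).+1.
Proof. by rewrite (perm_size (perm_ins w k)). Qed.

Lemma wp_ins w k : wp w -> wp (ins k w).
Proof.
move=> [hu hm]; split.
  rewrite (perm_uniq (perm_ins w k)) /= hu hm; apply/andP; split => //; lia.
move=> j; rewrite (perm_mem (perm_ins w k)) size_ins in_cons hm.
apply/orP/idP; first by case=> [/eqP ->|]; lia.
move=> h; case: (eqVneq j (size w).+1) => [->|hne]; [left | right] => //; lia.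
Qed.

Lemma del_max_ins w k : wp w -> del_max (ins k w) = w.
Proof.
move=> [hu hm]; rewrite /del_max size_ins /ins filter_cat /= eqxx /= -filter_cat cat_take_drop.
apply/all_filterP/allP => j hj; apply/negP => /eqP hj'; move: hj; rewrite hj' hm; lia.
Qed.

Lemma wp_decomp n w : wp w -> size w = n.+1 ->
  exists w' k, [/\ wp w', size w' = n, (k <= n)%N & w = ins k w'].
Proof.
move=> [hu hm] hs.
have hin : n.+1 \in w by rewrite hm hs; lia.
set k := index n.+1 w.
have hk : (k < size w)%N by rewrite index_mem.
have ew : w = take k w ++ n.+1 :: drop k.+1 w.
  by rewrite -{1}(cat_take_drop k w) (drop_nth 0 hk) nth_index.
set w1 := take k w; set w2 := drop k.+1 w.
have s1 : size w1 = k by rewrite size_takel // ltnW.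
have hu' := hu; rewrite ew cat_uniq in hu'.
case/and3P: hu' => u1 /hasPn h12 /andP [n2 u2].
have n1 : n.+1 \notin w1 by apply: h12; rewrite mem_head.
have sw : size (w1 ++ w2) = n.
  by have := congr1 size ew; rewrite !size_cat /= hs -/w1 -/w2; lia.
exists (w1 ++ w2), k; split => //.
- split.
    rewrite cat_uniq u1 /=; apply/andP; split; last by [].
    apply/hasPn => x hx.
    by apply: h12; rewrite in_cons hx orbT.
  move=> j; rewrite sw mem_cat.
  have := hm j; rewrite {1}ew mem_cat in_cons hs.
  case: (eqVneq j n.+1) => [->|hne] /=.
    by rewrite (negbTE n1) (negbTE n2); lia.
  by move=> ->; lia.
- lia.
- rewrite /ins sw take_size_cat // drop_size_cat //.
Qed.

Definition pl (w : seq nat) (j : nat) : seq bool := [:: (j < next_of w j)%N; (j < prev_of w j)%N].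

Lemma wp_idx w j : wp w -> j \in w -> (index j w < size w)%N /\ nth 0 w (index j w) = j.
Proof. by move=> _ hj; rewrite index_mem nth_index. Qed.

Lemma letters w j : wp w -> j \in w -> profile_letters w j = pl w j.
Proof.
move=> [hu hm] hj; have hj' := hj; rewrite hm in hj'.
have hi : (index j w < size w)%N by rewrite index_mem.
have hp : prev_of w j != j.
  rewrite /prev_of; case e: (index j w) => [|i] /=; first lia.
  have hi1 : (i.+1 < size w)%N by rewrite -e.
  rewrite -(nth_index 0 hj) e nth_uniq //; [lia | exact: ltnW].
have hq : next_of w j != j.
  rewrite /next_of; case: (ltnP (index j w).+1 (size w)) => h.
    rewrite -{2}(nth_index 0 hj) (set_nth_default 0) // nth_uniq //; lia.
  rewrite nth_default //; lia.
rewrite /profile_letters /is_valley /is_peak /is_dasc /is_ddesc /pl.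
move: hp hq; case: (ltngtP (prev_of w j) j) => h1; case: (ltngtP (next_of w j) j) => h2 //=.
Qed.

Lemma profile_pl w : wp w -> profile w = flatten [seq pl w j | j <- iota 1 (size w)].
Proof.
move=> hw; rewrite /profile; congr flatten; apply/eq_in_map => j.
rewrite mem_iota => hj; apply: letters => //; rewrite hw.2; lia.
Qed.

Lemma size_flatten2 (L : seq (seq bool)) : all (fun s => size s == 2) L ->
  size (flatten L) = (2 * size L)%N.
Proof.
elim: L => [|s L IH] //= /andP [/eqP hs hL]; rewrite size_cat hs IH //; lia.
Qed.

Lemma nth_flatten2 (L : seq (seq bool)) i : all (fun s => size s == 2) L ->
  nth false (flatten L) i = nth false (nth [::] L i./2) (odd i).
Proof.
elim: L i => [|s L IH] i /=; first by rewrite !nth_nil.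
case/andP; case: s => [|a [|b [|]]] // _ hL.
case: i => [|[|i]] //=.
by rewrite IH // negbK.
Qed.

Lemma all_pl w n : all (fun s => size s == 2) [seq pl w j | j <- iota 1 n].
Proof. by apply/allP => s /mapP [j _ ->]. Qed.

Lemma size_profile w : wp w -> size (profile w) = (2 * size w)%N.
Proof. by move=> hw; rewrite profile_pl // size_flatten2 ?all_pl // size_map size_iota. Qed.

Lemma nth_flat_pl w n i : (i < 2 * n)%N ->
  nth false (flatten [seq pl w j | j <- iota 1 n]) i = nth false (pl w (i./2).+1) (odd i).
Proof.
move=> hi; rewrite nth_flatten2 ?all_pl // (nth_map 0); last first.
  by rewrite size_iota ltn_half_double -mul2n.
by rewrite nth_iota ?add1n // ltn_half_double -mul2n.
Qed.

Lemma nth_profile w i : wp w -> (i < 2 * size w)%N ->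
  nth false (profile w) i = nth false (pl w (i./2).+1) (odd i).
Proof. by move=> hw hi; rewrite profile_pl // nth_flat_pl. Qed.

Lemma index_ins w k j : wp w -> (k <= size w)%N -> j \in w ->
  index j (ins k w) = if (index j w < k)%N then index j w else (index j w).+1.
Proof.
move=> hw hk hj; have [hi hn] := wp_idx hw hj.
have hu : uniq (ins k w) by case: (wp_ins k hw).
rewrite -{1}hn; set i := index j w.
case: ltnP => h.
  have <- : nth 0 (ins k w) i = nth 0 w i by rewrite nth_ins // h.
  by rewrite index_uniq // size_ins; lia.
have <- : nth 0 (ins k w) i.+1 = nth 0 w i.
  by rewrite nth_ins // ltnNge (leqW h) /=; case: eqP => //; lia.
by rewrite index_uniq // size_ins; lia.
Qed.

Lemma pl_ins w k j : wp w -> (k <= size w)%N -> j \in w ->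
  (j < next_of (ins k w) j)%N = ((index j w).+1 == k) || (j < next_of w j)%N /\
  (j < prev_of (ins k w) j)%N = (index j w == k) || (j < prev_of w j)%N.
Proof.
move=> hw hk hj; have [hi hn] := wp_idx hw hj.
have hjs : (0 < j <= size w)%N by rewrite -hw.2.
rewrite /next_of /prev_of index_ins // size_ins.
set i := index j w.
case: (ltnP i k) => h.
  split.
    rewrite nth_ins //; case: (ltnP i.+1 k) => h2.
      rewrite (ltn_eqF h2) /= (@set_nth_default _ w 0 (size w).+2 i.+1); last lia.
      by rewrite (@set_nth_default _ w 0 (size w).+1 i.+1); last lia.
    have hjn : (j < (size w).+1)%N by lia.
    case: eqP => [->|hne]; first by rewrite /= hjn.
    exfalso; lia.
  case e: i => [|i0] /=; first by rewrite (@eq_sym _ 0) -e (gtn_eqF h).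
  rewrite nth_ins; last lia.
  rewrite ifT; last lia.
  rewrite -e (ltn_eqF h) //.
split.
  rewrite nth_ins // ifF; last lia.
  rewrite ifF; last lia.
  rewrite (_ : (i.+1 == k) = false) /=; last lia.
  case: (ltnP i.+1 (size w)) => h3.
    by rewrite (@set_nth_default _ w 0) // (@set_nth_default _ w 0 (size w).+1).
  rewrite !nth_default //; lia.
rewrite /= nth_ins // ifF; last lia.
case: (eqVneq i k) => [->|hne]; first by rewrite /=; lia.
case e: i => [|i0]; first lia.
by [].
Qed.

Lemma pl_ins_new w k : wp w -> (k <= size w)%N ->
  pl (ins k w) (size w).+1 = [:: k == size w; false].
Proof.
move=> hw hk; have hu : uniq (ins k w) by case: (wp_ins k hw).
have hidx : index (size w).+1 (ins k w) = k.
  have <- : nth 0 (ins k w) k = (size w).+1 by rewrite nth_ins // ltnn eqxx.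
  by rewrite index_uniq // size_ins.
rewrite /pl /next_of /prev_of hidx size_ins; congr [:: _; _].
  rewrite nth_ins // ifF; last lia.
  rewrite ifF; last lia.
  case: (ltnP k (size w)) => h.
    have : nth (size w).+2 w k \in w by rewrite mem_nth.
    rewrite /= hw.2; lia.
  rewrite /= nth_default //=; lia.
move: hu; case: k hk hidx => [|k] hk hidx hu /=; first by [].
rewrite nth_ins // ltnSn.
have : nth 0 w k \in w by rewrite mem_nth.
rewrite hw.2; lia.
Qed.

Lemma profile_ins w k : wp w -> (k <= size w)%N ->
  profile (ins k w) = flatten [seq pl (ins k w) j | j <- iota 1 (size w)] ++ [:: k == size w; false].
Proof.
move=> hw hk; rewrite profile_pl; last exact: wp_ins.
rewrite size_ins.
have -> : iota 1 (size w).+1 = iota 1 (size w) ++ [:: (size w).+1].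
  by have := iotaD 1 (size w) 1; rewrite addn1 add1n => ->.
rewrite map_cat flatten_cat /=; have := pl_ins_new hw hk; rewrite /pl => ->.
by rewrite ?cats0.
Qed.

Lemma prof_ins_last w : wp w -> profile (ins (size w) w) = profile w ++ [:: true; false].
Proof.
move=> hw; rewrite profile_ins // eqxx profile_pl //; congr (flatten _ ++ _).
apply/eq_in_map => j; rewrite mem_iota => hj.
have hjw : j \in w by rewrite hw.2; lia.
have [hi hn] := wp_idx hw hjw.
have [e1 e2] := pl_ins hw (leqnn _) hjw.
rewrite /pl e1 e2 (ltn_eqF hi) /=; congr [:: _; _].
case: eqP => //= he; symmetry; rewrite /next_of he nth_default //; lia.
Qed.

Definition qf (w : seq nat) (k : nat) : nat :=
  let x := nth 0 (0 :: w) k in let y := nth 0 w k in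
  if (y < x)%N then (x.-1).*2 else (y.-1).*2.+1.

Section QF.
Variables (w : seq nat) (k : nat).
Hypothesis hw : wp w.
Hypothesis hk : (k < size w)%N.

Let x := nth 0 (0 :: w) k.
Let y := nth 0 w k.

Lemma qf_y_in : y \in w.
Proof. by rewrite mem_nth. Qed.
Lemma qf_iy : index y w = k.
Proof. by rewrite index_uniq //; case: hw. Qed.
Lemma qf_ys : (0 < y <= size w)%N.
Proof. by rewrite -hw.2 qf_y_in. Qed.
Lemma qf_pxy : prev_of w y = x.
Proof. by rewrite /prev_of qf_iy. Qed.
Lemma qf_x_in : (0 < k)%N -> x \in w.
Proof. by case: k hk @x => [|k0] //= hk0 _; rewrite mem_nth // ltnW. Qed.
Lemma qf_xs : (x <= size w)%N.
Proof.
case: (posnP k) => h; first by rewrite /x h.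
by have := qf_x_in h; rewrite hw.2; lia.
Qed.
Lemma qf_ix : (0 < k)%N -> (index x w).+1 = k.
Proof.
case: k hk @x => [|k0] //= hk0 _.
by rewrite index_uniq //; [ exact: ltnW | case: hw].
Qed.
Lemma qf_nx : (0 < k)%N -> next_of w x = y.
Proof.
move=> h; rewrite /next_of qf_ix //.
by rewrite (@set_nth_default _ w 0).
Qed.
Lemma qf_xny : x != y.
Proof.
case: (posnP k) => h.
  by rewrite /x h /=; have := qf_ys; lia.
apply/eqP => exy.
have := qf_ix h; rewrite exy qf_iy; lia.
Qed.
Lemma qf_x0 : x = 0 -> k = 0.
Proof.
move=> hx0; case: (posnP k) => // h; have := qf_x_in h; rewrite hx0 hw.2; lia.
Qed.

Lemma core j (e : bool) : j \in w ->
  nth false (pl (ins k w) j) e = (((j.-1).*2 + e)%N == qf w k) || nth false (pl w j) e.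
Proof.
move=> hj; have [hi hn] := wp_idx hw hj.
have hjs : (0 < j <= size w)%N by rewrite -hw.2.
have [e1 e2] := pl_ins hw (ltnW hk) hj.
have ys := qf_ys; have xny := qf_xny; have xs := qf_xs.
rewrite /qf -/x -/y /pl; case: e => /=.
  rewrite e2; case: (eqVneq j y) => [ejy | hjy].
    rewrite ejy qf_iy eqxx qf_pxy /=; rewrite -!mul2n; case: (ltnP y x) => hyx; lia.
  have hik : (index j w == k) = false.
    apply/eqP => hik; move/eqP: hjy; apply; by rewrite -hn hik.
  rewrite hik /=; rewrite -!mul2n; case: (ltnP y x) => hyx; move/eqP: hjy; lia.
rewrite e1; case: (boolP ((index j w).+1 == k)) => hik /=.
  have k0 : (0 < k)%N by move/eqP: hik; lia.
  have ejx : j = x.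
    rewrite -hn -(nth_index 0 (qf_x_in k0)); congr nth.
    by have := qf_ix k0; move/eqP: hik; lia.
  rewrite ejx qf_nx // -!mul2n; case: (ltnP y x) => hyx; move/eqP: xny; lia.
have -> : ((j.-1).*2 + 0 == (if (y < x)%N then (x.-1).*2 else (y.-1).*2.+1)) = false.
  case: (ltnP y x) => hyx; rewrite -!mul2n; last lia.
  apply/eqP => hjx.
  have ejx : j = x by lia.
  have k0 : (0 < k)%N by case: (posnP k) => h //; move: hyx; rewrite /x h.
  by move: hik; rewrite ejx qf_ix // eqxx.
by [].
Qed.

End QF.

Lemma nth_profile2 w j (e : bool) : wp w -> (0 < j <= size w)%N ->
  nth false (profile w) ((j.-1).*2 + e) = nth false (pl w j) e.
Proof.
move=> hw hj; rewrite nth_profile //; last by case: e; rewrite -mul2n; lia.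
rewrite addnC half_bit_double oddD odd_double addbF oddb prednK //; lia.
Qed.

Lemma prof_ins w k : wp w -> (k < size w)%N ->
  [/\ (qf w k < 2 * size w)%N, nth false (profile w) (qf w k) = false &
      profile (ins k w) = set_nth false (profile w) (qf w k) true ++ [:: false; false]].
Proof.
move=> hw hk.
have ys := qf_ys hw hk; have xs := qf_xs hw hk.
have [hq hn] : (qf w k < 2 * size w)%N /\ nth false (profile w) (qf w k) = false.
  rewrite /qf; case: (ltnP (nth 0 w k) (nth 0 (0 :: w) k)) => hyx.
    split; first by rewrite -mul2n; lia.
    have k0 : (0 < k)%N by case: (posnP k) => h //; move: hyx; rewrite h.
    rewrite -[(_.-1).*2]addn0 (@nth_profile2 w _ false) //; last lia.
    by rewrite /pl /= (qf_nx hw hk k0); apply/negbTE; rewrite -leqNgt ltnW.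
  split; first by rewrite -mul2n; lia.
  rewrite -addn1 (@nth_profile2 w _ true) //.
  by rewrite /pl /= (qf_pxy hw hk); apply/negbTE; rewrite -leqNgt.
split => //.
rewrite profile_ins ?(ltnW hk) // (ltn_eqF hk); congr (_ ++ _).
have hsz : size (set_nth false (profile w) (qf w k) true) = (2 * size w)%N.
  by rewrite size_set_nth size_profile //; apply/maxn_idPr.
apply: (eq_from_nth (x0 := false)).
  by rewrite hsz size_flatten2 ?all_pl // size_map size_iota.
rewrite size_flatten2 ?all_pl // size_map size_iota => i hi.
rewrite nth_flat_pl // nth_set_nth /= nth_profile //.
have hj : (i./2).+1 \in w.
  by rewrite hw.2; move: hi; rewrite mul2n -ltn_half_double; lia.
rewrite (core hw hk) //=.
have -> : ((i./2).*2 + odd i)%N = i by rewrite addnC odd_double_half.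
by case: eqP.
Qed.

Lemma qf_inj w k1 k2 : wp w -> (k1 < size w)%N -> (k2 < size w)%N -> qf w k1 = qf w k2 -> k1 = k2.
Proof.
move=> hw h1 h2.
have y1 := qf_ys hw h1; have y2 := qf_ys hw h2.
have iy1 := qf_iy hw h1; have iy2 := qf_iy hw h2.
rewrite /qf; case: (ltnP (nth 0 w k1) (nth 0 (0 :: w) k1)) => hyx1;
case: (ltnP (nth 0 w k2) (nth 0 (0 :: w) k2)) => hyx2; rewrite -!mul2n => e; try lia.
  have ex : nth 0 (0 :: w) k1 = nth 0 (0 :: w) k2 by lia.
  have k10 : (0 < k1)%N by case: (posnP k1) => h //; move: hyx1; rewrite h.
  have k20 : (0 < k2)%N by case: (posnP k2) => h //; move: hyx2; rewrite h.
  have := qf_ix hw h1 k10; have := qf_ix hw h2 k20; rewrite ex; lia.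
have ey : nth 0 w k1 = nth 0 w k2 by lia.
by rewrite -iy1 ey iy2.
Qed.

Lemma qf_surj w q : wp w -> (q < 2 * size w)%N -> nth false (profile w) q = false ->
  exists2 k, (k < size w)%N & qf w k = q.
Proof.
move=> hw hq; rewrite nth_profile //.
set j := (q./2).+1.
have hj : j \in w by rewrite hw.2 /j; move: hq; rewrite mul2n -ltn_half_double; lia.
have [hi hn] := wp_idx hw hj.
have hjs : (0 < j <= size w)%N by rewrite -hw.2.
have eq := odd_double_half q.
rewrite /pl; case hoq: (odd q) eq => /= eq hnx.
  exists (index j w) => //.
  rewrite /qf -/(prev_of w j) hn ifF; last by move: hnx; rewrite /prev_of; lia.
  rewrite /j /=; lia.
have hi1 : ((index j w).+1 < size w)%N.
  by move: hnx; rewrite /next_of; case: (ltnP (index j w).+1 (size w)) => // h; rewrite nth_default //; lia.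
exists (index j w).+1 => //.
rewrite /qf /= hn.
have hne : nth 0 w (index j w).+1 != j.
  by rewrite -{2}hn nth_uniq //; [lia | case: hw].
have : (nth 0 w (index j w).+1 <= j)%N.
  by move: hnx; rewrite /next_of (@set_nth_default _ w 0) //; lia.
move: hne => /eqP hne hle; rewrite ifT; last lia.
rewrite /j /=; rewrite -mul2n; lia.
Qed.

Lemma prof_ins_inj w k1 k2 : wp w -> (k1 <= size w)%N -> (k2 <= size w)%N ->
  profile (ins k1 w) = profile (ins k2 w) -> k1 = k2.
Proof.
move=> hw h1 h2 e.
have hs k : size (flatten [seq pl (ins k w) j | j <- iota 1 (size w)]) = (2 * size w)%N.
  by rewrite size_flatten2 ?all_pl // size_map size_iota.
have e2 := congr1 (nth false ^~ (2 * size w)%N) e.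
move: e2; rewrite /= !profile_ins // !nth_cat !hs ltnn subnn /= => e2.
case: (ltnP k1 (size w)) => l1; case: (ltnP k2 (size w)) => l2.
- have [_ n1 p1] := prof_ins hw l1; have [_ n2 p2] := prof_ins hw l2.
  apply: (qf_inj hw l1 l2).
  have := congr1 (nth false ^~ (qf w k1)) e; rewrite /= p1 p2.
  have [q1 _ _] := prof_ins hw l1.
  have hsz : size (set_nth false (profile w) (qf w k2) true) = (2 * size w)%N.
    by rewrite size_set_nth size_profile //; apply/maxn_idPr; have [] := prof_ins hw l2.
  have hsz1 : size (set_nth false (profile w) (qf w k1) true) = (2 * size w)%N.
    by rewrite size_set_nth size_profile //; apply/maxn_idPr.
  rewrite !nth_cat hsz hsz1 q1 !nth_set_nth /= eqxx.
  by case: eqP => // _; rewrite n1.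
- by move: e2; rewrite (ltn_eqF l1); lia.
- by move: e2; rewrite (ltn_eqF l2); lia.
- lia.
Qed.

Lemma G2form m D E : (0 < m)%N -> is_dyck m D -> is_dyck m.+1 E -> sqsub D E ->
  E = D ++ [:: true; false] \/
  exists2 p, (p < 2 * m)%N & nth false D p = false /\ E = set_nth false D p true ++ [:: false; false].
Proof.
move=> m0 dD dE hsub; have [p0 hp0 [hE [h1 h2]]] := G2 m0 dD dE hsub.
have sE : size E = (2 * m).+2 by case: dE => -> _; lia.
have sD : size D = (2 * m)%N by case: dD.
case: (ltnP p0 (2 * m)) => hlt.
  right.
  have Dp : nth false D p0 = false.
    have := heightS D p0; have := height_step E p0.
    rewrite (hE p0) ?(ltnW hlt) // (hE p0.+1) // ltnSn sD hlt ltnn.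
    by case: nth => //=; lia.
  exists p0 => //; split => //.
  have := cand_flip dD hlt Dp; move=> /= [sC [hC [c1 c2]]].
  apply: eq_from_height; first by rewrite sE sC.
  move=> x; rewrite sE => hx.
  case: (leqP x (2 * m)) => hx2; first by rewrite hE // hC.
  have [->|->] : x = (2 * m).+1 \/ x = (2 * m).+2 by lia.
    by rewrite h1 c1.
  by rewrite h2 c2.
left; have ep : p0 = (2 * m)%N by lia.
subst p0.
have := cand_ud dD; move=> /= [sC [hC [c1 c2]]].
apply: eq_from_height; first by rewrite sE sC.
move=> x; rewrite sE => hx.
case: (leqP x (2 * m)) => hx2; first by rewrite hE // hC.
have [->|->] : x = (2 * m).+1 \/ x = (2 * m).+2 by lia.
  by rewrite h1 c1.
by rewrite h2 c2.
Qed.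

Lemma step_ok n w k : wp w -> size w = n -> (k <= n)%N -> is_dyck n (profile w) ->
  is_dyck n.+1 (profile (ins k w)) /\ ((0 < n)%N -> sqsub (profile w) (profile (ins k w))).
Proof.
move=> hw sw hk dD.
case: (ltnP k n) => hlt.
  have [hq hn ->] := @prof_ins w k hw ltac:(by rewrite sw).
  rewrite sw in hq.
  have := cand_flip dD hq hn; move=> /= [sC [hC [c1 c2]]].
  split; first by apply: (G1dyck dD (ltnW hq) sC hC c1 c2).
  by move=> n0; case: (G1gen n0 dD (ltnW hq) sC hC c1 c2).
have ek : k = size w by lia.
subst k; rewrite prof_ins_last //.
have := cand_ud dD; move=> /= [sC [hC [c1 c2]]].
split; first by apply: (G1dyck dD (leqnn _) sC hC c1 c2).
by move=> n0; case: (G1gen n0 dD (leqnn _) sC hC c1 c2).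
Qed.

Lemma wp_nil : wp [::].
Proof. by split => // j; rewrite in_nil /=; lia. Qed.

Lemma dyck_nil : is_dyck 0 [::].
Proof.
split; first by [].
by split; [move=> x _ | ]; rewrite /height ?take_nil big_nil.
Qed.

Lemma dyck_profile n w : wp w -> size w = n -> is_dyck n (profile w).
Proof.
elim: n w => [|n IH] w hw sw.
  by move/size0nil: sw => ->; apply: dyck_nil.
have [w' [k [hw' sw' hk ->]]] := wp_decomp hw sw.
by case: (@step_ok n w' k hw' sw' hk (IH _ hw' sw')).
Qed.

Definition chainw (w : seq nat) : seq (seq bool) :=
  [seq profile (derived (size w - i) w) | i <- iota 1 (size w)].

Lemma size_chainw w : size (chainw w) = size w.
Proof. by rewrite size_map size_iota. Qed.

Lemma chainw_ins w k : wp w -> chainw (ins k w) = rcons (chainw w) (profile (ins k w)).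
Proof.
move=> hw; rewrite /chainw size_ins.
have -> : iota 1 (size w).+1 = iota 1 (size w) ++ [:: (size w).+1].
  by have := iotaD 1 (size w) 1; rewrite addn1 add1n => ->.
rewrite map_cat cats1 /= subnn; congr rcons.
apply/eq_in_map => i; rewrite mem_iota => hi.
have -> : ((size w).+1 - i = (size w - i).+1)%N by lia.
by rewrite /derived iterSr del_max_ins.
Qed.

Lemma nth_chainw_last w : (0 < size w)%N -> nth [::] (chainw w) (size w).-1 = profile w.
Proof.
move=> h; rewrite (nth_map 0); last by rewrite size_iota; lia.
rewrite nth_iota; last lia.
by have -> : (size w - (1 + (size w).-1) = 0)%N by lia.
Qed.

Lemma chain_ok n w : wp w -> size w = n -> is_chain n (chainw w).
Proof.
elim: n w => [|n IH] w hw sw.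
  by move/size0nil: sw => ->; split.
have [w' [k [hw' sw' hk ew]]] := wp_decomp hw sw.
have [sc [hd hs]] := IH _ hw' sw'.
have [dE sE] := @step_ok n w' k hw' sw' hk (dyck_profile hw' sw').
rewrite ew chainw_ins //; split; first by rewrite size_rcons sc.
split.
  move=> i hi; rewrite nth_rcons sc.
  case: ltnP => h; first exact: hd.
  have ei : i = n by lia.
  by subst i; rewrite eqxx.
move=> i hi; rewrite !nth_rcons sc.
case: (ltnP i.+1 n) => h.
  by rewrite (ltnW h); apply: hs.
have ei : i = n.-1 by lia.
have n0 : (0 < n)%N by lia.
rewrite ifT; last lia.
rewrite ifT; last lia.
rewrite ei -sw' nth_chainw_last ?sw' //.
by apply: sE.
Qed.

Lemma chain_inj n w1 w2 : wp w1 -> wp w2 -> size w1 = n -> size w2 = n ->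
  chainw w1 = chainw w2 -> w1 = w2.
Proof.
elim: n w1 w2 => [|n IH] w1 w2 hw1 hw2 s1 s2.
  by move/size0nil: s1 => ->; move/size0nil: s2 => ->.
have [w1' [k1 [hw1' sw1' hk1 ->]]] := wp_decomp hw1 s1.
have [w2' [k2 [hw2' sw2' hk2 ->]]] := wp_decomp hw2 s2.
rewrite !chainw_ins // => /rcons_inj [e1 e2].
have ew := IH _ _ hw1' hw2' sw1' sw2' e1.
subst w2'; congr ins.
by apply: (prof_ins_inj hw1'); rewrite ?sw1'.
Qed.

Lemma dyck1 E : is_dyck 1 E -> E = [:: true; false].
Proof.
case=> sE [posE endE].
have h1 := posE 1%N ltac:(rewrite sE).
destruct E as [|a [|b [|c l]]]; try discriminate; clear sE posE.
move: h1 endE; rewrite /height /= !big_cons !big_nil.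
by case: a; case: b => //=; lia.
Qed.

Lemma chain_surj n c : is_chain n c -> exists w, [/\ wp w, size w = n & chainw w = c].
Proof.
elim: n c => [|n IH] c [sc [hd hs]].
  exists [::]; split; [exact: wp_nil | by [] | ].
  by rewrite (size0nil sc).
case/lastP: c sc hd hs => [|c' E] //; rewrite size_rcons => -[sc'] hd hs.
have hc' : is_chain n c'.
  split => //; split.
    by move=> i hi; have := hd i (leqW hi); rewrite nth_rcons sc' hi.
  by move=> i hi; have := hs i (leqW hi); rewrite !nth_rcons sc' hi (ltnW hi).
have [w' [hw' sw' ec']] := IH _ hc'.
have dE : is_dyck n.+1 E by have := hd n (ltnSn n); rewrite nth_rcons sc' ltnn eqxx.
case: (posnP n) => n0.
  rewrite n0 in sw'; have ew' := size0nil sw'; subst w'.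
  exists (ins 0 [::]); split; [exact: (wp_ins 0 wp_nil) | by rewrite size_ins n0 | ].
  rewrite chainw_ins; last exact: wp_nil.
  rewrite ec' (prof_ins_last wp_nil) /=; congr rcons.
  by move: dE; rewrite n0 => /dyck1 ->.
have hsub : sqsub (profile w') E.
  have := hs n.-1 ltac:(lia); rewrite !nth_rcons sc' ifT; last lia.
  rewrite prednK // ltnn eqxx -ec' -sw' nth_chainw_last //; lia.
have dD := dyck_profile hw' sw'.
case: (G2form n0 dD dE hsub) => [eE | [p hp [hn eE]]].
  exists (ins (size w') w'); split.
  - exact: wp_ins.
  - by rewrite size_ins sw'.
  - by rewrite chainw_ins // ec' prof_ins_last // eE.
rewrite -sw' in hp; have [k hk ek] := qf_surj hw' hp hn.
exists (ins k w'); split.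
- exact: wp_ins.
- by rewrite size_ins sw'.
- rewrite chainw_ins // ec'; have [_ _ ->] := prof_ins hw' hk.
  by rewrite ek eE.
Qed.

Lemma perm_word_wp n (s : 'S_n) : wp (perm_word s) /\ size (perm_word s) = n.
Proof.
have sz : size (perm_word s) = n by rewrite size_map size_enum_ord.
split => //; split.
  rewrite map_inj_uniq ?enum_uniq // => i j /succn_inj /val_inj; exact: perm_inj.
move=> j; rewrite sz; apply/mapP/idP.
  by move=> [i _ ->]; rewrite ltn_ord.
move=> /andP [h0 hj].
have hk : (j.-1 < n)%N by lia.
exists ((s^-1)%g (Ordinal hk)); first by rewrite mem_enum.
by rewrite permKV /=; lia.
Qed.

Lemma perm_word_inj n : injective (@perm_word n).
Proof.
move=> s1 s2 /eq_in_map h; apply/permP => i; apply: val_inj.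
by apply: succn_inj; apply: h; rewrite mem_enum.
Qed.

Lemma perm_word_surj n w : wp w -> size w = n -> exists s : 'S_n, perm_word s = w.
Proof.
move=> [hu hm] sw.
have H : forall i : 'I_n, ((nth 0 w i).-1 < n)%N.
  move=> i; have : nth 0 w i \in w by rewrite mem_nth // sw.
  rewrite hm sw; lia.
pose f (i : 'I_n) : 'I_n := Ordinal (H i).
have hpos : forall i : 'I_n, (0 < nth 0 w i)%N.
  move=> i; have : nth 0 w i \in w by rewrite mem_nth // sw.
  rewrite hm; lia.
have finj : injective f.
  move=> i j /(congr1 val) /= e; apply: val_inj => /=.
  have hi : (i < size w)%N by rewrite sw ltn_ord.
  have hj : (j < size w)%N by rewrite sw ltn_ord.
  apply/eqP; rewrite -(nth_uniq 0 hi hj hu).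
  apply/eqP; rewrite -(prednK (hpos i)) -(prednK (hpos j)); congr _.+1; exact: e.
exists (perm finj).
rewrite /perm_word.
have -> : [seq (perm finj i).+1 | i <- enum 'I_n] = [seq nth 0 w (val i) | i <- enum 'I_n].
  apply/eq_map => i; rewrite permE /=; have := hpos i; lia.
by rewrite (map_comp (nth 0 w) val) val_enum_ord -sw -/(mkseq _ _) mkseq_nth.
Qed.

Lemma chain_of_E n (s : 'S_n) : chain_of s = chainw (perm_word s).
Proof. by rewrite /chain_of /chainw (perm_word_wp s).2. Qed.

Unset Implicit Arguments.

Theorem mainTheorem7 (n : nat) (hn : 1 <= n) :
  injective (@chain_of n) /\
  (forall s : 'S_n, is_chain n (chain_of s)) /\
  (forall c : seq (seq bool), is_chain n c -> exists s : 'S_n, chain_of s = c).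
Proof.
split.
  move=> s1 s2; rewrite !chain_of_E => e; apply: perm_word_inj.
  have [h1 z1] := perm_word_wp s1; have [h2 z2] := perm_word_wp s2.
  exact: (chain_inj h1 h2 z1 z2 e).
split.
  by move=> s; rewrite chain_of_E; have [h z] := perm_word_wp s; exact: chain_ok.
move=> c hc; have [w [hw sw ew]] := chain_surj hc.
have [s es] := perm_word_surj hw sw.
by exists s; rewrite chain_of_E es.
Qed.
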